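(* Let $0<\alpha<1$ and $c>0$. With probability 1 there exists $n_0(\omega)$ such that for all $n\ge n_0$, all integers $0\le j\le n-n^\alpha$ and all integers $x$ with $|x|\le c\log n$, $$\xi(S_j+x,n)=\xi(S_j+x,\infty).$$
   Context: Let $0<q<p<1$ with $p+q=1$. Let $X_1,X_2,\dots$ be i.i.d. with $\mathbf P(X_1=1)=p$, $\mathbf P(X_1=-1)=q$, $S_0=0$, $S_n=X_1+\dots+X_n$. For $y\in\mathbb Z$, $n\ge1$, $\xi(y,n)=\#\{k:0<k\le n,\ S_k=y\}$ and $\xi(y,\infty)=\lim_n\xi(y,n)$. *)

(* Defs.v *)
From HB Require Import structures.
From mathcomp Require Import all_boot all_order all_algebra.
From mathcomp Require Import all_classical all_reals all_analysis.
Set Implicit Arguments. Unset Strict Implicit. Unset Printing Implicit Defensive.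
Import Order.TTheory GRing.Theory Num.Theory.
Local Open Scope classical_set_scope.
Local Open Scope ring_scope.

(* X 0, X 1, X 2, ... play the role of X_1, X_2, X_3, ... in the paper. *)
Definition walk {T : Type} (X : nat -> T -> int) (n : nat) (w : T) : int :=
  \sum_(i < n) X i w.

Definition xi {T : Type} (X : nat -> T -> int) (y : int) (n : nat) (w : T) : nat :=
  count (fun k => walk X k w == y) (iota 1 n).

Definition xi_inf {R : realType} {T : Type} (X : nat -> T -> int) (y : int) (w : T)
  : \bar R := limn (fun n => ((xi X y n w)%:R : R)%:E).

Definition indep_int {d : measure_display} {T : measurableType d} {R : realType}
  (P : probability T R) (X : nat -> T -> int) : Prop :=
  (forall k (v : int), measurable [set w | X k w = v]) /\
  (forall (I : seq nat) (v : nat -> int), uniq I ->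
     P (\big[setI/setT]_(k <- I) [set w | X k w = v k]) =
     (\prod_(k <- I) P [set w | X k w = v k])%E).

(* Main.v *)
Require Import Defs.
From HB Require Import structures.
From mathcomp Require Import all_boot all_order all_algebra.
From mathcomp Require Import all_classical all_reals all_analysis.
From mathcomp Require Import ring lra.
Import Order.TTheory GRing.Theory Num.Theory.
Local Open Scope classical_set_scope.
Local Open Scope ring_scope.
Fixpoint allseqs (m : nat) : seq (seq int) :=
  if m is m'.+1 then [seq 1%Z :: s | s <- allseqs m'] ++ [seq (-1)%Z :: s | s <- allseqs m']
  else [:: [::]].

Definition pm1 (x : int) : bool := (x == 1%Z) || (x == (-1)%Z).

Lemma mem_allseqs (s : seq int) : all pm1 s -> s \in allseqs (size s).
Proof.
elim: s => [|x s IH] //= /andP[hx hs].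
rewrite mem_cat; case/orP: hx => /eqP ->.
  by rewrite map_f // IH.
by rewrite orbC map_f // IH.
Qed.

Lemma sum_allseqs (R : comNzRingType) (F : int -> R) m :
  \sum_(s <- allseqs m) \prod_(x <- s) F x = (F 1%Z + F (-1)%Z) ^+ m.
Proof.
elim: m => [|m IH] /=; first by rewrite big_cons big_nil big_nil addr0 expr0.
rewrite big_cat /= !big_map.
under eq_bigr do rewrite big_cons.
under [X in _ + X]eq_bigr do rewrite big_cons.
by rewrite -!big_distrr /= IH -mulrDl exprS.
Qed.

Lemma prod_bound (R : realFieldType) (w : int -> R) (u : R) (s : seq int) (K : int) :
  0 < u -> u <= 1 -> (forall x, 0 <= w x) ->
  (\sum_(x <- s) x <= K)%R ->
  \prod_(x <- s) w x <= u ^ (- K) * \prod_(x <- s) (w x * u ^ x).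
Proof.
move=> u0 u1 w0; elim: s K => [|x s IH] K /=.
  rewrite !big_nil mulr1 => K0.
  case: K K0 => // k _.
  rewrite -exprz_inv.
  by rewrite -exprnP exprn_ege1 // invf_ge1.
rewrite !big_cons => hK.
have hK' : \sum_(x <- s) x <= K - x by rewrite lerBrDl.
apply: le_trans (ler_wpM2l (w0 x) (IH _ hK')) _.
have uu : u \is a GRing.unit by rewrite unitf_gt0.
have -> : - (K - x) = x + - K by rewrite opprB addrC.
by rewrite exprzDr // le_eqVlt; apply/orP; left; apply/eqP; ring.
Qed.

Lemma geo_eseries (R : realType) (a x : R) : 0 <= x -> x < 1 ->
  (\sum_(i <oo) (a * x ^+ i)%:E = (a / (1 - x))%:E)%E.
Proof.
move=> x0 x1; apply/cvg_lim => //.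
apply: cvg_EFin; first by apply: nearW => n; rewrite sumEFin.
have -> : (fine \o (fun n => (\sum_(0 <= i < n) (a * x ^+ i)%:E)%E)) =
   series (geometric a x).
  by apply/funext => n /=; rewrite sumEFin /= /series /=.
by apply: cvg_geometric_series; rewrite ger0_norm.
Qed.

Definition wt {R : Type} (p q : R) (x : int) : R := if x == 1%Z then p else q.

Definition cyl {T : Type} (X : nat -> T -> int) (j : nat) (s : seq int) : set T :=
  \big[setI/setT]_(k <- iota j (size s)) [set w | X k w = nth 0%Z s (k - j)].

Lemma cyl_measurable (d : measure_display) (T : measurableType d) (X : nat -> T -> int) j s :
  (forall k (v : int), measurable [set w | X k w = v]) -> measurable (cyl X j s).
Proof. by move=> hm; apply: bigsetI_measurable => k _; exact: hm. Qed.

Lemma P_cyl (R : realType) (d : measure_display) (T : measurableType d)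
  (P : probability T R) (p q : R) (X : nat -> T -> int)
  (hind : indep_int P X)
  (hX1 : forall k, P [set w | X k w = 1%Z] = p%:E)
  (hXm1 : forall k, P [set w | X k w = (-1)%Z] = q%:E) j s :
  all pm1 s -> P (cyl X j s) = (\prod_(x <- s) wt p q x)%:E.
Proof.
move=> hs; rewrite /cyl (hind.2 (iota j (size s)) (fun k => nth 0%Z s (k - j))) ?iota_uniq //.
rewrite -prodEFin.
rewrite -[in iota j _](addn0 j) iotaDl big_map.
rewrite [RHS](big_nth 0%Z) /= -/(index_iota 0 (size s)).
rewrite /index_iota subn0.
apply: eq_big_seq => i; rewrite mem_iota add0n => /andP[_ hi].
rewrite addKn /wt.
have : pm1 (nth 0%Z s i) by apply: (allP hs); rewrite mem_nth.
by case/orP => /eqP ->; rewrite ?hX1 ?hXm1.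
Qed.

Lemma allseqs_pm1 m s : s \in allseqs m -> all pm1 s.
Proof.
elim: m s => [|m IH] s /=; first by rewrite inE => /eqP ->.
rewrite mem_cat => /orP[] /mapP[t /IH ht ->] /=; by rewrite ht.
Qed.

Lemma measure_bigsetU_le {R : realType} {d : measure_display} {T : measurableType d}
  (mu : {measure set T -> \bar R}) {I : Type} (r : seq I) (Pr : pred I) (F : I -> set T) :
  (forall i, measurable (F i)) ->
  (mu (\big[setU/set0]_(i <- r | Pr i) F i) <= \sum_(i <- r | Pr i) mu (F i))%E.
Proof.
move=> mF; elim: r => [|i r IH]; first by rewrite !big_nil measure0.
rewrite !big_cons; case: (Pr i) => //.
apply: le_trans (measureU2 _ _ _) _ => //.
  by apply: bigsetU_measurable.
exact: leeD.
Qed.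

Definition Aev {T : Type} (X : nat -> T -> int) (j m : nat) (K : int) : set T :=
  \big[setU/set0]_(s <- allseqs m | (\sum_(x <- s) x <= K)%R) cyl X j s.

Lemma Aev_measurable (d : measure_display) (T : measurableType d) (X : nat -> T -> int) j m K :
  (forall k (v : int), measurable [set w | X k w = v]) -> measurable (Aev X j m K).
Proof. by move=> hm; apply: bigsetU_measurable => s _; exact: cyl_measurable. Qed.

Lemma P_Aev (R : realType) (d : measure_display) (T : measurableType d)
  (P : probability T R) (p q : R) (X : nat -> T -> int)
  (hind : indep_int P X)
  (hX1 : forall k, P [set w | X k w = 1%Z] = p%:E)
  (hXm1 : forall k, P [set w | X k w = (-1)%Z] = q%:E)
  (hp : 0 <= p) (hq : 0 <= q) (u : R) (u0 : 0 < u) (u1 : u <= 1) j m K :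
  (P (Aev X j m K) <= (u ^ (- K) * (p * u + q * u^-1) ^+ m)%:E)%E.
Proof.
apply: le_trans (measure_bigsetU_le P _ _ _ _) _.
  by move=> s; apply: cyl_measurable; exact: hind.1.
rewrite big_seq_cond.
rewrite (eq_bigr (fun s => (\prod_(x <- s) wt p q x)%:E)); last first.
  by move=> s /andP[hs _]; apply: P_cyl => //; exact: allseqs_pm1 hs.
rewrite sumEFin lee_fin.
have w0 : forall x, 0 <= wt p q x by move=> x; rewrite /wt; case: ifP.
apply: (@le_trans _ _ (\sum_(s <- allseqs m | (s \in allseqs m) && (\sum_(x <- s) x <= K)%R)
   (u ^ (- K) * \prod_(x <- s) (wt p q x * u ^ x)))).
  by apply: ler_sum => s /andP[_ hK]; apply: prod_bound.
have F0 : forall s, 0 <= u ^ (- K) * \prod_(x <- s) (wt p q x * u ^ x).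
  move=> s; apply: mulr_ge0; first exact: exprz_ge0 (ltW u0).
  by apply: prodr_ge0 => x _; apply: mulr_ge0 => //; exact: exprz_ge0 (ltW u0).
apply: (@le_trans _ _ (\sum_(s <- allseqs m) (u ^ (- K) * \prod_(x <- s) (wt p q x * u ^ x)))).
  rewrite [X in _ <= X](bigID (fun s => (s \in allseqs m) && (\sum_(x <- s) x <= K)%R)) /=.
  by rewrite lerDl; apply: sumr_ge0 => s _.
rewrite -big_distrr /= sum_allseqs /wt /=.
by rewrite expr1z (_ : (-1)%Z = - 1%Z) // -exprz_inv expr1z.
Qed.

Definition Bev {R : realType} {T : Type} (X : nat -> T -> int) (alpha : R) (Kf : nat -> int) (n : nat) : set T :=
  \big[setU/set0]_(j < n.+1 | (j%:R <= n%:R - n%:R `^ alpha :> R))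
     \bigcup_i Aev X j (n.+1 + i - j) (Kf n).

Lemma Bev_measurable (R : realType) (d : measure_display) (T : measurableType d)
  (X : nat -> T -> int) (alpha : R) Kf n :
  (forall k (v : int), measurable [set w | X k w = v]) -> measurable (Bev X alpha Kf n).
Proof.
move=> hm; apply: bigsetU_measurable => j _.
by apply: bigcupT_measurable => i; exact: Aev_measurable.
Qed.

Lemma P_Bev (R : realType) (d : measure_display) (T : measurableType d)
  (P : probability T R) (X : nat -> T -> int) (alpha rho c0 : R) Kf n :
  (forall k (v : int), measurable [set w | X k w = v]) ->
  0 < rho -> rho < 1 -> 0 <= c0 ->
  (forall j m, P (Aev X j m (Kf n)) <= (c0 * rho ^+ m)%:E)%E ->
  (P (Bev X alpha Kf n) <= (n.+1%:R * (c0 * rho `^ (n%:R `^ alpha) / (1 - rho)))%:E)%E.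
Proof.
move=> hm r0 r1 c00 hA.
apply: le_trans (measure_bigsetU_le P _ _ _ _) _.
  by move=> j; apply: bigcupT_measurable => i; exact: Aev_measurable.
have -> : (n.+1%:R * (c0 * rho `^ (n%:R `^ alpha) / (1 - rho)))%:E =
  (\sum_(j < n.+1) (c0 * rho `^ (n%:R `^ alpha) / (1 - rho))%:E)%E.
  by rewrite sumEFin sumr_const card_ord mulr_natl.
rewrite [X in (_ <= X)%E](bigID (fun j : 'I_n.+1 => (j%:R <= n%:R - n%:R `^ alpha :> R))) /=.
apply: (@le_trans _ _ ((\sum_(i < n.+1 | (i%:R <= n%:R - n%:R `^ alpha :> R)%R)
   (c0 * rho `^ (n%:R `^ alpha) / (1 - rho))%:E)%E)); last first.
  rewrite leeDl // sumEFin lee_fin; apply: sumr_ge0 => j _.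
  by apply: divr_ge0; [apply: mulr_ge0 => //; exact: powR_ge0 | rewrite subr_ge0 ltW].
apply: lee_sum => j hj.
have H := measure_sigma_subadditive P.
rewrite /measurable_subset_sigma_subadditive /subset_sigma_subadditive in H.
apply: le_trans (H _ (fun i => Aev X j (n.+1 + i - j) (Kf n)) _ _ _) _.
- by move=> i; exact: Aev_measurable.
- by apply: bigcupT_measurable => i; exact: Aev_measurable.
- exact: subset_refl.
have jn : (j <= n)%N by rewrite -ltnS.
apply: (@le_trans _ _ ((\sum_(i <oo) ((c0 * rho ^+ (n.+1 - j)) * rho ^+ i)%:E)%E)).
  apply: lee_nneseries => [i _ _|i _]; first exact: measure_ge0.
  apply: le_trans (hA _ _) _.
  by rewrite -addnBAC ?(leqW jn) // exprD mulrA.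
rewrite geo_eseries ?(ltW r0) // lee_fin.
apply: ler_wpM2r; first by rewrite invr_ge0 subr_ge0 ltW.
apply: ler_wpM2l => //.
rewrite -powR_mulrn ?(ltW r0) //.
apply: ger_powR; first by rewrite r0 ltW.
rewrite natrB //; move: hj; rewrite lerBrDr => hj.
  rewrite -natr1; lra.
exact: leqW.
Qed.

Lemma mem_bigsetU {T : Type} {I : eqType} (r : seq I) (Pr : pred I) (F : I -> set T) i w :
  i \in r -> Pr i -> F i w -> (\big[setU/set0]_(i <- r | Pr i) F i) w.
Proof.
elim: r => [|a r IH] //=; rewrite inE big_cons => /orP[/eqP <-|ir] Pi Fi.
  by rewrite Pi; left.
by case: (Pr a); [right|]; apply: IH.
Qed.

Lemma walk_seg {T : Type} (X : nat -> T -> int) w j m :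
  \sum_(x <- [seq X (j + l)%N w | l <- iota 0 m]) x = walk X (j + m) w - walk X j w.
Proof.
rewrite big_map /walk -!(big_mkord xpredT (fun i => X i w)).
rewrite (big_cat_nat (n := j)) ?leq_addr //= addrAC subrr add0r.
rewrite /index_iota (addnC j m) addnK.
by rewrite -{2}(addn0 j) iotaDl big_map.
Qed.

Lemma in_cyl {T : Type} (X : nat -> T -> int) w j m :
  cyl X j [seq X (j + l)%N w | l <- iota 0 m] w.
Proof.
rewrite /cyl size_map size_iota.
rewrite big_seq; elim/big_rec: _ => // k S kin HS; split => //=.
move: kin; rewrite mem_iota => /andP[jk km].
rewrite (nth_map 0%N); last by rewrite size_iota ltn_subLR.
by rewrite nth_iota ?ltn_subLR // add0n subnKC.
Qed.

Lemma no_visit (R : realType) {T : Type} (X : nat -> T -> int) (alpha : R) Kf n w j (x : int) :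
  (forall k, pm1 (X k w)) -> ~ Bev X alpha Kf n w ->
  (j%:R <= n%:R - n%:R `^ alpha :> R) -> (x <= Kf n)%R ->
  forall k, (n < k)%N -> walk X k w != walk X j w + x.
Proof.
move=> G nB hj hx k nk; apply/negP => /eqP hk; apply: nB.
have jn : (j < n.+1)%N.
  rewrite ltnS -(ler_nat R); apply: le_trans hj _.
  by rewrite lerBlDr lerDl powR_ge0.
have jk : (j <= k)%N by apply: leq_trans (ltnW nk); rewrite -ltnS.
set m := (k - j)%N.
have km : k = (j + m)%N by rewrite /m subnKC.
apply: (@mem_bigsetU _ _ _ _ _ (Ordinal jn)) => //; first exact: mem_index_enum.
exists (k - n.+1)%N => //.
have -> : (n.+1 + (k - n.+1) - Ordinal jn)%N = m by rewrite /= subnKC.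
apply: (@mem_bigsetU _ _ _ _ _ [seq X (j + l)%N w | l <- iota 0 m]).
- have := @mem_allseqs [seq X (j + l)%N w | l <- iota 0 m].
  rewrite size_map size_iota; apply; apply/allP => y /mapP[l _ ->]; exact: G.
- by rewrite walk_seg -km hk addrAC subrr add0r.
- exact: in_cyl.
Qed.

Lemma xi_stable (R : realType) {T : Type} (X : nat -> T -> int) (y : int) n w :
  (forall k, (n < k)%N -> walk X k w != y) ->
  (((xi X y n w)%:R : R)%:E = xi_inf X y w).
Proof.
move=> hk; rewrite /xi_inf; apply/esym/lim_near_cst => //.
near=> N.
have nN : (n <= N)%N by near: N; exists n.
rewrite /xi -(subnKC nN) iotaD count_cat.
have -> : count (fun k => walk X k w == y) (iota (1 + n) (N - n)) = 0%N.
  rewrite (eq_in_count (a2 := pred0)) ?count_pred0 //.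
  move=> k; rewrite mem_iota => /andP[h _]; apply/negbTE/hk.
  by rewrite add1n in h.
by rewrite addn0.
Unshelve. all: end_near.
Qed.
Lemma exp_sq_bound (R : realType) (y : R) : 0 <= y -> y ^+ 2 / 4 <= expR y.
Proof.
move=> y0.
have h1 := expR_ge1Dx (y / 2).
have -> : expR y = expR (y / 2) ^+ 2 by rewrite -expRM_natl; congr expR; field.
have h2 : 0 <= 1 + y / 2 by lra.
have h3 : (1 + y / 2) ^+ 2 <= expR (y / 2) ^+ 2.
  by rewrite ler_pXn2r // ?nnegrE // (le_trans h2 h1).
apply: le_trans h3; nra.
Qed.

Lemma analytic {R : realType} (a rho alpha c : R) : 1 <= a -> 0 < rho -> rho < 1 -> 0 < alpha -> 0 < c ->
 exists N0 : nat, forall n : nat, (N0 <= n)%N -> forall k : nat, k%:R <= c * ln (n%:R : R) + 1 ->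
 n.+1%:R ^+ 2 * n.+2%:R * (a ^+ k * rho `^ (n%:R `^ alpha)) <= 12 * a.
Proof.
move=> a1 r0 r1 al0 c0.
have lr : ln rho < 0 by apply: ln_lt0; rewrite r0 r1.
have la : 0 <= ln a by exact: ln_ge0.
set g := - ln rho.
have g0 : 0 < g by rewrite /g oppr_gt0.
set b := 3 + c * ln a.
have b0 : 0 <= b by rewrite /b; apply: addr_ge0 => //; apply: mulr_ge0 => //; exact: ltW.
set L0 := 4 * b / (g * alpha ^+ 2).
have L00 : 0 <= L0.
  by rewrite /L0; apply: divr_ge0; [apply: mulr_ge0 | apply: mulr_ge0 => //; [exact: ltW| exact: sqr_ge0]].
exists (Num.truncn (expR L0)).+1 => n hn k hk.
have eL0 : expR L0 < n%:R.
  have := truncn_itv (expR_ge0 L0) => /andP[_ h].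
  by apply: lt_le_trans h _; rewrite ler_nat.
have n0 : 0 < (n%:R : R) by apply: lt_trans eL0; exact: expR_gt0.
set L := ln (n%:R : R).
have hnL : (n%:R : R) = expR L by rewrite /L lnK.
have LL0 : L0 <= L.
  rewrite -[L0]expRK /L ler_ln ?posrE ?expR_gt0 //; exact: ltW.
have L0' : 0 <= L by apply: le_trans LL0.
have key : b * L <= g * expR (alpha * L).
  have he := @exp_sq_bound R (alpha * L) (mulr_ge0 (ltW al0) L0').
  apply: le_trans (ler_wpM2l (ltW g0) he).
  have : 4 * b <= g * alpha ^+ 2 * L.
    by rewrite -ler_pdivrMl ?mulr_gt0 ?exprn_gt0 // mulrC.
  nra.
have pa : rho `^ (n%:R `^ alpha) = expR (- g * expR (alpha * L)).
  rewrite /powR (negbTE (lt0r_neq0 n0)) (negbTE (lt0r_neq0 r0)).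
  by rewrite /g; congr expR; ring.
have ak : a ^+ k <= a * expR (c * L * ln a).
  have a0 : 0 < a by apply: lt_le_trans ltr01 a1.
  rewrite -[a ^+ k]lnK ?posrE ?exprn_gt0 // lnXn //.
  rewrite -[a in a * _]lnK ?posrE // -expRD ler_expR -mulr_natr.
  have := ler_wpM2l la hk; rewrite -/L; lra.
have pn : n.+1%:R ^+ 2 * n.+2%:R <= 12 * expR (3 * L).
  rewrite expRM_natl -hnL.
  have n1 : (1 : R) <= n%:R by rewrite ler1n -(ltr0n R).
  rewrite -natr1 -(natr1 n.+1) -natr1; nra.
apply: (@le_trans _ _ (12 * expR (3 * L) * (a * expR (c * L * ln a) * expR (- g * expR (alpha * L))))).
  apply: ler_pM; first by apply: mulr_ge0; [exact: exprn_ge0 (ler0n _ _)|exact: ler0n].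
  - by apply: mulr_ge0 => //; [exact: exprn_ge0 (le_trans ler01 a1)|exact: powR_ge0].
  - exact: pn.
  rewrite pa; apply: ler_wpM2r; first exact: expR_ge0.
  exact: ak.
have -> : 12 * expR (3 * L) * (a * expR (c * L * ln a) * expR (- g * expR (alpha * L))) =
   12 * a * expR (b * L - g * expR (alpha * L)).
  have -> : b * L - g * expR (alpha * L) = 3 * L + (c * L * ln a + - g * expR (alpha * L)).
    by rewrite /b; ring.
  rewrite !expRD; ring.
apply: ler_piMr; first by apply: mulr_ge0 => //; exact: le_trans ler01 a1.
by rewrite expR_le1 subr_le0.
Qed.
Lemma tele_sum (R : realType) (D : R) (h : nat -> \bar R) : (0 <= D)%R ->
  (forall n, 0 <= h n)%E -> (forall n, h n <= (D / (n.+1%:R * n.+2%:R))%:E)%E ->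
  (\sum_(n <oo) h n < +oo)%E.
Proof.
move=> D0 h0 hb.
pose f (n : nat) : R := (- (n.+1%:R)^-1)%R.
have fcvg : (EFin \o f) x @[x --> \oo] --> 0%:E.
  apply: cvg_EFin; first by apply: nearW.
  rewrite (_ : (fine \o (EFin \o f)) = - harmonic); last by apply/funext => n.
  rewrite -oppr0; apply: cvgN; exact: cvg_harmonic.
have flim : limn (EFin \o f) = 0%:E by apply/cvg_lim.
have nd : {homo f : x y / (x <= y)%N >-> (x <= y)%R}.
  move=> x y xy; rewrite /f lerN2 lef_pV2 ?posrE ?ltr0Sn // ler_nat ltnS //.
have tel := @nondecreasing_telescope_sumey R 0 f.
rewrite flim in tel; have := tel isT nd; rewrite /f /= => tel'.
apply: (@le_lt_trans _ _ (\sum_(0 <= n <oo) (D%:E * ((f n.+1)%:E - (f n)%:E)))%E).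
  apply: lee_nneseries => [n _ _|n _]; first exact: h0.
  apply: le_trans (hb n) _.
  rewrite -EFinB -EFinM lee_fin /f.
  rewrite le_eqVlt; apply/orP; left; apply/eqP.
  by field; apply/andP; split; apply: lt0r_neq0; have := ler0n R n; lra.
rewrite nneseriesZl; last first.
  by move=> n _; rewrite -EFinB lee_fin subr_ge0 nd.
rewrite /f tel' -EFinM; exact: ltry.
Qed.
Lemma good_null {R : realType} {d : measure_display} {T : measurableType d}
  {P : probability T R} {p q : R} {X : nat -> T -> int} (hpq : p + q = 1)
  (hm : forall k (v : int), measurable [set w | X k w = v])
  (hX1 : forall k, P [set w | X k w = 1%Z] = p%:E)
  (hXm1 : forall k, P [set w | X k w = (-1)%Z] = q%:E) :
  measurable (\bigcup_k ~` ([set w | X k w = 1%Z] `|` [set w | X k w = (-1)%Z])) /\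
  P (\bigcup_k ~` ([set w | X k w = 1%Z] `|` [set w | X k w = (-1)%Z])) = 0%E.
Proof.
have mk : forall k, measurable (~` ([set w | X k w = 1%Z] `|` [set w | X k w = (-1)%Z])).
  by move=> k; apply: measurableC; apply: measurableU.
have z : forall k, P (~` ([set w | X k w = 1%Z] `|` [set w | X k w = (-1)%Z])) = 0%E.
  move=> k.
  have hU : P ([set w | X k w = 1%Z] `|` [set w | X k w = (-1)%Z]) = 1%E.
    rewrite measureU //; last by apply/seteqP; split => w //= [-> ].
    rewrite (_ : (_ + _)%R = (p + q)%:E); first by rewrite hpq.
    by rewrite EFinD -(hX1 k) -(hXm1 k).
  rewrite probability_setC; last by apply: measurableU.
  by rewrite hU subee.
split; first exact: bigcupT_measurable.
apply/eqP; rewrite eq_le measure_ge0 andbT.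
have H := measure_sigma_subadditive P.
rewrite /measurable_subset_sigma_subadditive /subset_sigma_subadditive in H.
apply: le_trans (H _ _ mk (bigcupT_measurable _ mk) _) _; first by [].
rewrite (@eq_eseriesr _ _ (fun=> 0%E)); last by move=> n _; exact: (z n).
by rewrite eseries0.
Qed.

Theorem lemma7p2 (R : realType) (d : measure_display) (T : measurableType d)
  (P : probability T R) (p q : R) (X : nat -> T -> int)
  (hq0 : 0 < q) (hqp : q < p) (hp1 : p < 1) (hpq : p + q = 1)
  (hind : indep_int P X)
  (hX1 : forall k, P [set w | X k w = 1%Z] = p%:E)
  (hXm1 : forall k, P [set w | X k w = (-1)%Z] = q%:E)
  (alpha c : R) (ha0 : 0 < alpha) (ha1 : alpha < 1) (hc : 0 < c) :
  {ae P, forall w, exists n0 : nat, forall n : nat, (n0 <= n)%N ->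
     forall j : nat, (j%:R <= n%:R - n%:R `^ alpha) ->
     forall x : int, (`|x|%:~R <= c * ln n%:R) ->
       (((xi X (walk X j w + x) n w)%:R : R)%:E = xi_inf X (walk X j w + x) w)}.
Proof.
have hm := hind.1.
have p0 : 0 < p by lra.
pose u := (2 * p)^-1.
pose a := 2 * p.
have a1 : 1 <= a by rewrite /a; lra.
have a0 : 0 < a by lra.
have u0 : 0 < u by rewrite /u invr_gt0.
have u1 : u <= 1 by rewrite /u invf_le1.
pose rho := p * u + q * u^-1.
have erho : rho = 1 / 2 + 2 * p * q by rewrite /rho /u invrK; field; lra.
have r0 : 0 < rho by rewrite erho; nra.
have r1 : rho < 1 by rewrite erho; nra.
pose Kn (n : nat) : nat := (Num.truncn (c * ln (n%:R : R))).+1.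
pose Kf (n : nat) : int := Posz (Kn n).
have [N0 hN0] := analytic a rho alpha c a1 r0 r1 ha0 hc.
pose F (n : nat) := Bev X alpha Kf (n + N0).
have mF : forall n, measurable (F n) by move=> n; exact: Bev_measurable.
pose D := 12 * a / (1 - rho).
have cln0 : forall m : nat, 0 <= c * ln (m%:R : R).
  move=> [|m]; first by rewrite ln0 ?mulr0.
  by apply: mulr_ge0; [exact: ltW|apply: ln_ge0; rewrite ler1n].
have PF : forall n, (P (F n) <= (D / (n.+1%:R * n.+2%:R))%:E)%E.
  move=> n; set m := (n + N0)%N.
  have hA : forall j mm, (P (Aev X j mm (Kf m)) <= (u ^ (- Kf m) * rho ^+ mm)%:E)%E.
    by move=> j mm; apply: P_Aev => //; exact: ltW.
  have c00 : 0 <= u ^ (- Kf m) by exact: exprz_ge0 (ltW u0).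
  apply: le_trans (P_Bev _ _ _ P X alpha rho _ Kf m hm r0 r1 c00 hA) _.
  rewrite lee_fin.
  have eu : u ^ (- Kf m) = a ^+ Kn m by rewrite -exprz_inv /u invrK exprnP.
  rewrite eu.
  have hk : (Kn m)%:R <= c * ln (m%:R : R) + 1.
    have := truncn_itv (cln0 m) => /andP[h1 _].
    by rewrite /Kn -natr1 lerD2r.
  have := hN0 m (leq_addl _ _) _ hk.
  set Y := a ^+ Kn m * rho `^ (m%:R `^ alpha) => hY.
  have Y0 : 0 <= Y by apply: mulr_ge0; [exact: exprn_ge0 (ltW a0)|exact: powR_ge0].
  have nm1 : (n.+1%:R : R) <= m.+1%:R by rewrite ler_nat ltnS leq_addr.
  have nm2 : (n.+2%:R : R) <= m.+2%:R by rewrite ler_nat ltnS ltnS leq_addr.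
  have n10 : (0 : R) < n.+1%:R by [].
  have n20 : (0 : R) < n.+2%:R by [].
  have key : m.+1%:R * Y <= 12 * a / (n.+1%:R * n.+2%:R).
    rewrite ler_pdivlMr ?mulr_gt0 //.
    apply: le_trans hY.
    have m10 : (0 : R) <= m.+1%:R by [].
    apply: (@le_trans _ _ (m.+1%:R * Y * (m.+1%:R * m.+2%:R))).
      apply: ler_wpM2l; first exact: mulr_ge0.
      by apply: ler_pM => //; exact: ltW.
    by rewrite le_eqVlt; apply/orP; left; apply/eqP; ring.
  have -> : D / (n.+1%:R * n.+2%:R) = (12 * a / (n.+1%:R * n.+2%:R)) / (1 - rho).
    by rewrite /D; field; rewrite ?gt_eqF ?subr_gt0 ?mulr_gt0.
  by rewrite mulrA ler_pM2r ?invr_gt0 ?subr_gt0.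
have BC : P (lim_sup_set F) = 0%E.
  apply: lim_sup_set_cvg0 => //.
  apply: (@tele_sum _ D) => //.
  by rewrite /D; apply: divr_ge0; [lra|lra].
have [mN1 PN1] := good_null hpq hm hX1 hXm1.
have mL : measurable (lim_sup_set F).
  by apply: bigcap_measurable => // k _; exact: bigcup_measurable.
eexists; split; first exact: measurableU mN1 mL.
  apply/eqP; rewrite eq_le measure_ge0 andbT.
  apply: le_trans (measureU2 _ mN1 mL) _.
  apply: (@le_trans _ _ (0 + 0)%E); last by rewrite adde0.
  by apply: leeD; rewrite le_eqVlt; apply/orP; left; apply/eqP; [exact: PN1|exact: BC].
move=> w /= Hw; apply: contrapT => Hn; apply: Hw.
have G : forall k, pm1 (X k w).
  move=> k; apply/negPn/negP => hk; apply: Hn; left; exists k => //=.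
  move: hk; rewrite /pm1 => /norP[h1 h2] [] e.
    by rewrite e in h1.
  by rewrite e in h2.
have [N HN] : exists N, forall n, (N <= n)%N -> ~ F n w.
  apply: contrapT => hN; apply: Hn; right => N _.
  apply: contrapT => hN'; apply: hN; exists N => n Nn Fn; apply: hN'; exists n => //.
exists (N + N0).+1 => n hn j hj x hx.
have nN0 : (N0 <= n)%N by apply: leq_trans hn; apply: leqW; rewrite leq_addl.
have NnN0 : (N <= n - N0)%N by rewrite leq_subRL // addnC; exact: ltnW.
have Bn : ~ Bev X alpha Kf n w.
  by have := HN _ NnN0; rewrite /F subnK.
have n1 : (1 : R) <= n%:R by rewrite ler1n (leq_trans _ hn).
have cl0 : 0 <= c * ln (n%:R : R) by apply: mulr_ge0; [exact: ltW|exact: ln_ge0].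
have hxK : (x <= Kf n)%R.
  have := truncn_itv cl0 => /andP[_ h2].
  have h1 : (x%:~R : R) <= `|x|%:~R by rewrite ler_int ler_norm.
  have h3 : ((Kf n)%:~R : R) = (Kn n)%:R by rewrite /Kf pmulrn.
  rewrite -(ler_int R) h3; apply: le_trans h1 _; apply: le_trans hx _; exact: ltW h2.
apply: xi_stable; exact: (@no_visit _ _ X alpha Kf n w j x G Bn hj hxK).
Qed.
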